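(* Let $P=\{x\in\mathbb{R}^n:\tilde A x+\tilde b\ge 0\}$ be a polyhedron (with $\tilde A\in\mathbb{R}^{p\times n}$, $\tilde b\in\mathbb{R}^p$) having at least two non-parallel linear boundaries, i.e. its boundary contains facets lying in two non-parallel hyperplanes. Then the indicator function $\mathbb{1}_P$ cannot be expressed on $\mathbb{R}^n$ by any discrete-time LIF-SNN with a single time step ($T=1$) and only one hidden (spike) layer ($L=1$), neither with spike output nor with membrane potential output.
   Context: With $T=1$, $L=1$, direct encoding and input $x\in\mathbb{R}^n$, a discrete-time LIF-SNN computes the spike vector $s^1=H(Wx+b')$ for some $W\in\mathbb{R}^{m\times n}$, $b'\in\mathbb{R}^m$ (the bias absorbing the initial potential and threshold terms), where $H$ is the entrywise Heaviside function ($H(z)=1$ iff $z\ge 0$). With spike output (which requires $m=1$) the realization is $x\mapsto H(\langle w,x\rangle+b')$; with membrane potential output the realization is $x\mapsto w_0+\sum_{i=1}^m v_i H(\langle w_i,x\rangle+b'_i)$ for arbitrary $w_0,v_1,\dots,v_m\in\mathbb{R}$. The indicator function $\mathbb{1}_P$ equals $1$ on $P$ and $0$ on $\mathbb{R}^n\setminus P$. *)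

(* Defs.v *)
From HB Require Import structures.
From mathcomp Require Import all_boot all_order all_algebra.
From mathcomp Require Import reals.
Set Implicit Arguments. Unset Strict Implicit. Unset Printing Implicit Defensive.
Import Order.TTheory GRing.Theory Num.Theory.
Local Open Scope ring_scope.

Section Defs.
Variable R : realType.

Definition dotv (n : nat) (u v : 'cV[R]_n) : R := \sum_(i < n) u i 0 * v i 0.

Definition heav (z : R) : R := if 0 <= z then 1 else 0.

Definition in_polyhedron (n p : nat) (A : 'M[R]_(p, n)) (b : 'cV[R]_p)
  (x : 'cV[R]_n) : bool := [forall i : 'I_p, 0 <= (A *m x + b) i 0].

Definition indicator_poly (n p : nat) (A : 'M[R]_(p, n)) (b : 'cV[R]_p)
  (x : 'cV[R]_n) : R := if in_polyhedron A b x then 1 else 0.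

(* The hyperplane {x | <a,x> + c = 0} (a <> 0) contains a facet of P:
   it is a supporting hyperplane of P and P meets it in an
   (n-1)-dimensional set, i.e. in n affinely independent points
   x0, x0 + d_0, ..., x0 + d_(n-2). *)
Definition facet_in_hyperplane (n p : nat) (A : 'M[R]_(p, n)) (b : 'cV[R]_p)
  (a : 'cV[R]_n) (c : R) : Prop :=
  a != 0 /\
  (forall x, in_polyhedron A b x -> 0 <= dotv a x + c) /\
  exists (x0 : 'cV[R]_n) (d : 'I_n.-1 -> 'cV[R]_n),
    [/\ in_polyhedron A b x0, dotv a x0 + c = 0,
        (forall i, in_polyhedron A b (x0 + d i) /\ dotv a (x0 + d i) + c = 0) &
        (forall lam : 'I_n.-1 -> R,
            \sum_(i < n.-1) lam i *: d i = 0 -> forall i, lam i = 0)].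

Definition parallel_normals (n : nat) (a1 a2 : 'cV[R]_n) : Prop :=
  exists k : R, a1 = k *: a2.

Definition two_nonparallel_boundaries (n p : nat) (A : 'M[R]_(p, n))
  (b : 'cV[R]_p) : Prop :=
  exists (a1 a2 : 'cV[R]_n) (c1 c2 : R),
    [/\ facet_in_hyperplane A b a1 c1, facet_in_hyperplane A b a2 c2 &
        ~ parallel_normals a1 a2].

(* Realizations of a LIF-SNN with T = 1, L = 1, direct encoding. *)
Definition snn_spike_realization (n : nat) (w : 'cV[R]_n) (b' : R)
  (x : 'cV[R]_n) : R := heav (dotv w x + b').

Definition snn_membrane_realization (n m : nat) (w0 : R) (v : 'I_m -> R)
  (W : 'I_m -> 'cV[R]_n) (b' : 'I_m -> R) (x : 'cV[R]_n) : R :=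
  w0 + \sum_(i < m) v i * heav (dotv (W i) x + b' i).

End Defs.

(* Main.v *)
Require Import Defs.
From HB Require Import structures.
From mathcomp Require Import all_boot all_order all_algebra.
From mathcomp Require Import reals ring lra.
Import Order.TTheory GRing.Theory Num.Theory.
Local Open Scope ring_scope.

Section Helpers.
Variable R : realType.

Lemma dotv_lin (n : nat) (w x y : 'cV[R]_n) (k : R) :
  dotv w (x + k *: y) = dotv w x + k * dotv w y.
Proof.
rewrite /dotv mulr_sumr -big_split /=; apply: eq_bigr => i _.
rewrite !mxE; ring.
Qed.

Lemma dotv_pos (n : nat) (a : 'cV[R]_n) : a != 0 -> 0 < dotv a a.
Proof.
move=> an0; rewrite lt_def; apply/andP; split; last first.
  by apply: sumr_ge0 => i _; rewrite -expr2 sqr_ge0.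
apply/eqP => h; move/eqP: an0; apply; apply/matrixP => i j.
rewrite (ord1 j) mxE; apply/eqP; rewrite -sqrf_eq0 expr2; apply/eqP.
by apply: (psumr_eq0P _ h) => // k _; rewrite -expr2 sqr_ge0.
Qed.

Lemma small_t (I : eqType) (l : seq I) (P : pred I) (F : I -> R) :
  (forall i, P i -> 0 < F i) -> exists2 t, 0 < t & forall i, i \in l -> P i -> t <= F i.
Proof.
move=> HF; elim: l => [|x l [t t0 Ht]]; first by exists 1.
case Px: (P x).
  exists (Num.min t (F x)); first by rewrite lt_min t0 HF.
  move=> i; rewrite inE => /orP [/eqP -> _|il Pi]; first by rewrite ge_min lexx orbT.
  by rewrite ge_min Ht.
exists t => // i; rewrite inE => /orP [/eqP -> |il Pi]; first by rewrite Px.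
exact: Ht.
Qed.

Lemma avoid (l : seq R) (a b : R) : a < b ->
  exists a', exists b', [/\ a <= a', a' < b', b' <= b &
    forall s, a' < s -> s < b' -> s \notin l].
Proof.
move=> ab; elim: l => [|x l [a' [b' [h1 h2 h3 h4]]]].
  by exists a, b; split => //.
set c := (a' + b') / 2.
have c1 : a' < c by rewrite /c; lra.
have c2 : c < b' by rewrite /c; lra.
case: (ltP x c) => xc.
  exists c, b'; split => //; first by lra.
  move=> s cs sb; rewrite inE negb_or (h4 s) ?andbT; try lra.
exists a', c; split => //; first by lra.
move=> s cs sb; rewrite inE negb_or (h4 s) ?andbT; try lra.
Qed.

Lemma avoid_pt (l : seq R) (a b : R) : a < b -> exists s, [/\ a < s, s < b & s \notin l].
Proof.
move=> /(avoid l) [a' [b' [h1 h2 h3 h4]]].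
exists ((a' + b') / 2); split; [lra|lra|apply: h4; lra].
Qed.

Lemma heav_stable (g tau t : R) : g != 0 -> 0 < t -> t * (`|tau| + 1) <= `|g| ->
  heav (g + (- t) * tau) = heav g.
Proof.
move=> g0 t0 h; have n1 := ler_norm tau; have n2 := ler_norm (- tau).
rewrite normrN in n2.
have e1 : t * tau <= t * `|tau| by rewrite ler_wpM2l // ltW.
have e2 : t * (- tau) <= t * `|tau| by rewrite ler_wpM2l // ltW.
rewrite /heav; case: (ltgtP 0 g) => g1.
- rewrite (gtr0_norm g1) in h.
  have -> // : 0 <= g + - t * tau by lra.
- rewrite (ltr0_norm g1) in h.
  have -> // : (0 <= g + - t * tau) = false.
  by apply/negbTE; rewrite -ltNge; lra.
- by move: g0; rewrite -g1 eqxx.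
Qed.

Lemma key (m : nat) (w0 : R) (v be sg tau : 'I_m -> R) (s : R) :
 (forall i, sg i != 0 -> be i + s * sg i != 0) ->
 exists2 t, 0 < t & w0 + \sum_(i < m) v i * heav (be i + s * sg i + (- t) * tau i) =
   w0 + \sum_(i < m) v i * heav (be i + s * sg i) -
   \sum_(i < m) v i * (if (sg i == 0) && (be i == 0) && (0 < tau i) then 1 else 0).
Proof.
move=> good.
pose ga i := be i + s * sg i.
have Fpos : forall i, ga i != 0 -> 0 < `|ga i| / (`|tau i| + 1).
  move=> i gi; apply: divr_gt0; first by rewrite normr_gt0.
  by have := normr_ge0 (tau i); lra.
have [t t0 Ht] := @small_t _ (enum 'I_m) (fun i => ga i != 0) _ Fpos.
exists t => //.
rewrite -addrA -sumrB; congr (_ + _); apply: eq_bigr => i _.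
have [gi|gi] := eqVneq (ga i) 0.
  have si : sg i = 0.
    have [//|/good] := eqVneq (sg i) 0.
    by rewrite -/(ga i) gi eqxx.
  have bi : be i = 0 by move: gi; rewrite /ga si mulr0 addr0.
  rewrite si bi eqxx mulr0 !addr0 add0r /= /heav lexx.
  have [tp|tn] := ltP 0 (tau i).
    have -> : (0 <= - t * tau i) = false.
      by apply/negbTE; rewrite -ltNge; nra.
    by rewrite subrr mulr0.
  have -> : (0 <= - t * tau i) by nra.
  by rewrite mulr0 subr0.
have -> : (sg i == 0) && (be i == 0) = false.
  apply/negbTE; apply: contra gi => /andP [/eqP s0 /eqP b0].
  by rewrite /ga s0 b0 mulr0 addr0.
rewrite /= mulr0 subr0 heav_stable //.
by rewrite -ler_pdivlMr ?Ht ?mem_enum //; have := normr_ge0 (tau i); lra.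
Qed.
Lemma rank_of_inj m n (M : 'M[R]_(m,n)) :
  (forall v : 'rV_m, v *m M = 0 -> v = 0) -> \rank M = m.
Proof.
move=> H; apply/eqP; rewrite -/(row_free M) -kermx_eq0; apply/eqP/row_matrixP => k.
rewrite row0; apply: H; apply/sub_kermxP; exact: row_sub.
Qed.

Lemma exists_nonorth (n : nat) (a1 a2 : 'cV[R]_n) (d : 'I_n.-1 -> 'cV[R]_n) :
  a2 != 0 -> ~ parallel_normals a1 a2 -> (forall i, dotv a1 (d i) = 0) ->
  (forall lam : 'I_n.-1 -> R, \sum_(i < n.-1) lam i *: d i = 0 -> forall i, lam i = 0) ->
  exists i, dotv a2 (d i) != 0.
Proof.
move=> a20 npar o1 ind.
case: (boolP [exists i, dotv a2 (d i) != 0]) => [/existsP //|hn].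
rewrite negb_exists in hn; have o2 : forall i, dotv a2 (d i) = 0.
  by move=> i; move/forallP: hn => /(_ i) /negbNE /eqP.
pose M := \matrix_(k < 2, j < n) (if k == ord0 then a1 j 0 else a2 j 0).
pose N := \matrix_(j < n, i < n.-1) d i j 0.
have MN : M *m N = 0.
  apply/matrixP => k i; rewrite !mxE.
  under eq_bigr do rewrite !mxE.
  case: (k == ord0); [exact: o1 | exact: o2].
have rkM : \rank M = 2%N.
  apply: rank_of_inj => v vM.
  have hj : forall j, v 0 ord0 * a1 j 0 + v 0 (lift ord0 ord0) * a2 j 0 = 0.
    move=> j; move/matrixP: vM => /(_ 0 j); rewrite !mxE big_ord_recl big_ord1.
    by rewrite !mxE /=.
  have p0 : v 0 ord0 = 0.
    apply/eqP; apply/negPn/negP => p0; apply: npar.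
    exists (- v 0 (lift ord0 ord0) / v 0 ord0); apply/matrixP => i j.
    rewrite (ord1 j) !mxE; have := hj i => e.
    rewrite -[a1 i 0](mulKf p0) (_ : v 0 ord0 * a1 i 0 = - (v 0 (lift ord0 ord0) * a2 i 0)).
      by field.
    by lra.
  have q0 : v 0 (lift ord0 ord0) = 0.
    apply/eqP; apply/negPn/negP => q0; move/negP: a20; apply; apply/eqP/matrixP => i j.
    rewrite (ord1 j) mxE; have := hj i; rewrite p0 mul0r add0r => /eqP.
    by rewrite mulf_eq0 (negbTE q0) /= => /eqP.
  apply/matrixP => i k; rewrite (ord1 i) mxE.
  case: k => [[|[|k]] hk] //.
    by rewrite -p0; congr (v 0 _); apply: val_inj.
  by rewrite -q0; congr (v 0 _); apply: val_inj.
have rkN : \rank N^T = n.-1.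
  apply: rank_of_inj => v vN.
  have hs : \sum_(i < n.-1) v 0 i *: d i = 0.
    apply/matrixP => j k; rewrite (ord1 k) summxE !mxE.
    transitivity ((v *m N^T) 0 j); last by rewrite vN mxE.
    by rewrite mxE; apply: eq_bigr => i _; rewrite !mxE.
  apply/matrixP => i k; rewrite (ord1 i) mxE; exact: ind hs k.
have := mulmx0_rank_max MN; rewrite rkM -mxrank_tr rkN.
have L : forall k : nat, (2 + k.-1 <= k)%N -> False.
  by case=> [|k] //=; rewrite add2n ltnn.
by move/L.
Qed.

Lemma no_membrane (n p : nat) (A : 'M[R]_(p, n)) (b : 'cV[R]_p) :
  two_nonparallel_boundaries A b ->
  ~ exists (m : nat) (w0 : R) (v : 'I_m -> R) (W : 'I_m -> 'cV[R]_n) (b' : 'I_m -> R),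
       forall x : 'cV[R]_n,
         indicator_poly A b x = snn_membrane_realization w0 v W b' x.
Proof.
move=> [a1 [a2 [c1 [c2 [F1 F2 npar]]]]] [m [w0 [v [W [b' Hf]]]]].
case: F1 => a10 [sup1 [x0 [d [inx0 hx0 hd ind]]]].
case: F2 => a20 [sup2 _].
have o1 : forall i, dotv a1 (d i) = 0.
  move=> i; case: (hd i) => _; have := @dotv_lin _ a1 x0 (d i) 1.
  rewrite scale1r mul1r => ->; lra.
have [i0 hi0] := @exists_nonorth _ a1 a2 d a20 npar o1 ind.
pose u := d i0.
pose al := dotv a2 u.
pose z s t := x0 + s *: u + (- t) *: a1.
pose be i := dotv (W i) x0 + b' i.
pose sg i := dotv (W i) u.
pose ta i := dotv (W i) a1.
have Hg : forall s t, indicator_poly A b (z s t) =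
   w0 + \sum_(i < m) v i * heav (be i + s * sg i + (- t) * ta i).
  move=> s t; rewrite Hf /snn_membrane_realization; congr (_ + _).
  apply: eq_bigr => i _; rewrite /z !dotv_lin /be /sg /ta; congr (_ * heav _); ring.
have Hg0 : forall s, indicator_poly A b (z s 0) =
   w0 + \sum_(i < m) v i * heav (be i + s * sg i).
  move=> s; rewrite Hg; congr (_ + _); apply: eq_bigr => i _.
  by rewrite oppr0 mul0r addr0.
have aa := @dotv_pos _ a1 a10.
have Hout : forall s t, 0 < t -> indicator_poly A b (z s t) = 0.
  move=> s t t0; rewrite /indicator_poly; case: ifP => // hin.
  have := sup1 _ hin; rewrite /z !dotv_lin (o1 i0).
  have : 0 < t * dotv a1 a1 by apply: mulr_gt0.
  lra.
have Hin : forall s, 0 <= s -> s <= 1 -> indicator_poly A b (z s 0) = 1.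
  move=> s s0 s1; rewrite /indicator_poly /z oppr0 scale0r addr0.
  suff -> : in_polyhedron A b (x0 + s *: u) by [].
  apply/forallP => k; move/forallP: inx0 => /(_ k).
  case: (hd i0) => /forallP /(_ k) h1 _.
  move: h1; rewrite -/u !mulmxDr -scalemxAr !mxE => h1 h2.
  nra.
have Hout2 : forall s, dotv a2 x0 + c2 + s * al < 0 -> indicator_poly A b (z s 0) = 0.
  move=> s hs; rewrite /indicator_poly; case: ifP => // hin.
  have := sup2 _ hin; rewrite /z oppr0 scale0r addr0 dotv_lin -/al.
  lra.
pose l := [seq - be i / sg i | i <- enum 'I_m].
have good : forall s, s \notin l -> forall i, sg i != 0 -> be i + s * sg i != 0.
  move=> s sl i si; apply: contra sl => /eqP e; apply/mapP; exists i.
    by rewrite mem_enum.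
  rewrite -(mulfK si s) (_ : s * sg i = - be i) //; lra.
pose C := \sum_(i < m) v i * (if (sg i == 0) && (be i == 0) && (0 < ta i) then 1 else 0).
have [s1 [s10 s11 s1l]] := @avoid_pt l 0 1 ltr01.
have [t1 t10 e1] := @key m w0 v be sg ta s1 (good s1 s1l).
have C1 : C = 1.
  have := Hout s1 t1 t10; rewrite Hg e1 -Hg0 Hin ?ltW //; rewrite -/C; lra.
have [lo [hi [lohi Hlh]]] : exists lo hi, lo < hi /\
    forall s, lo < s -> s < hi -> dotv a2 x0 + c2 + s * al < 0.
  pose s0 := - (dotv a2 x0 + c2) / al.
  have E : forall s, dotv a2 x0 + c2 + s * al = (s - s0) * al.
    by move=> s; rewrite /s0; field.
  case: (ltgtP al 0) => [aln|alp|ale]; last by move: hi0; rewrite -/al ale eqxx.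
    exists s0, (s0 + 1); split; first lra.
    by move=> s h1 h2; rewrite E; nra.
  exists (s0 - 1), s0; split; first lra.
  by move=> s h1 h2; rewrite E; nra.
have [s2 [s20 s21 s2l]] := @avoid_pt l lo hi lohi.
have [t2 t20 e2] := @key m w0 v be sg ta s2 (good s2 s2l).
have : C = 0.
  have := Hout s2 t2 t20; rewrite Hg e2 -Hg0 Hout2 ?Hlh //; rewrite -/C; lra.
by rewrite C1; move/eqP; rewrite oner_eq0.
Qed.

End Helpers.

Theorem lemmaB7 (R : realType) (n p : nat) (A : 'M[R]_(p, n)) (b : 'cV[R]_p) :
  two_nonparallel_boundaries A b ->
  (~ exists (w : 'cV[R]_n) (b' : R),
       forall x : 'cV[R]_n, indicator_poly A b x = snn_spike_realization w b' x) /\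
  (~ exists (m : nat) (w0 : R) (v : 'I_m -> R) (W : 'I_m -> 'cV[R]_n) (b' : 'I_m -> R),
       forall x : 'cV[R]_n,
         indicator_poly A b x = snn_membrane_realization w0 v W b' x).
Proof.
move=> H; split; last exact: (@no_membrane R n p A b H).
move=> [w [b' Hw]]; apply: (@no_membrane R n p A b H).
exists 1%N, (0 : R), (fun _ => (1 : R)), (fun _ => w), (fun _ => b') => x.
by rewrite Hw /snn_membrane_realization big_ord1 add0r mul1r.
Qed.
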